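(* Assume $\mathcal T$ is contravariantly finite in $\mathcal A$ and let $f\in\mathcal A(X,Y)$. The following are equivalent: (1) $\overline f$ is a strong monomorphism in the left triangulated category $\underline{\mathcal A}$; (2) for every (equivalently, for some) $\mathcal T$-precover $p_Y:T_Y\to Y$, the projection $g:T\to X$ from the pullback $T$ of $f$ and $p_Y$ is a $\mathcal T$-precover of $X$; (3) for every (equivalently, for some) $\mathcal T$-precover $p_Y:T_Y\to Y$, the pullback object $T$ of $f$ and $p_Y$ belongs to $\mathcal T$.
   Context: $\mathcal A$ is an abelian category and $\mathcal T$ is a full additive subcategory of $\mathcal A$ closed under finite direct sums and direct summands. The stable category $\underline{\mathcal A}=\mathcal A/\langle\mathcal T\rangle$ has the same objects as $\mathcal A$ and morphisms modulo those factoring through an object of $\mathcal T$; $\overline f$ is the class of $f$. When $\mathcal T$ is contravariantly finite, $\underline{\mathcal A}$ carries the left triangulated structure: $\Omega Y=\ker(p_Y)$ for a $\mathcal T$-precover $p_Y:T_Y\to Y$; for $f:X\to Y$ one forms the pullback $Z$ of $f$ and $p_Y$ with projection $g:Z\to X$ and induced morphism $\Omega Y\to Z$; left triangles are the diagrams in $\underline{\mathcal A}$ isomorphic to $\Omega Y\to Z\xrightarrow{\overline g}X\xrightarrow{\overline f}Y$. A morphism $\overline f:X\to Y$ is a strong monomorphism if there is a left triangle $\Omega Y\to 0\to X\xrightarrow{\overline f}Y$. *)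

(* Defs.v *)
Set Implicit Arguments.

Record PreCat := {
  Obj : Type;
  Hom : Obj -> Obj -> Type;
  idm : forall A, Hom A A;
  comp : forall A B D, Hom B D -> Hom A B -> Hom A D;
  zerom : forall A B, Hom A B;
  addm : forall A B, Hom A B -> Hom A B -> Hom A B;
  oppm : forall A B, Hom A B -> Hom A B }.

Arguments Hom {_} _ _.
Arguments idm {_} _.
Arguments comp {_ A B D} _ _.
Arguments zerom {_ A B}.
Arguments addm {_ A B} _ _.
Arguments oppm {_ A B} _.

Notation "g ∘ f" := (comp g f) (at level 40, left associativity).

Section Defs.
Variable C : PreCat.
Implicit Types (A B D E K P Q Z W X Y O TY TD : Obj C).

Definition is_preadditive : Prop :=
  (forall A B D E : Obj C, forall (h : Hom D E) (g : Hom B D) (f : Hom A B), h ∘ (g ∘ f) = (h ∘ g) ∘ f) /\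
  (forall A B : Obj C, forall (f : Hom A B), idm B ∘ f = f) /\
  (forall A B : Obj C, forall (f : Hom A B), f ∘ idm A = f) /\
  (forall A B : Obj C, forall (f g h : Hom A B), addm f (addm g h) = addm (addm f g) h) /\
  (forall A B : Obj C, forall (f g : Hom A B), addm f g = addm g f) /\
  (forall A B : Obj C, forall (f : Hom A B), addm f zerom = f) /\
  (forall A B : Obj C, forall (f : Hom A B), addm f (oppm f) = zerom) /\
  (forall A B D : Obj C, forall (h : Hom B D) (f g : Hom A B), h ∘ (addm f g) = addm (h ∘ f) (h ∘ g)) /\
  (forall A B D : Obj C, forall (f g : Hom B D) (h : Hom A B), (addm f g) ∘ h = addm (f ∘ h) (g ∘ h)).

Definition is_zero_obj (O : Obj C) : Prop :=
  (forall A (u v : Hom O A), u = v) /\ (forall A (u v : Hom A O), u = v).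

Definition is_biproduct (A B P : Obj C) (i1 : Hom A P) (i2 : Hom B P)
  (p1 : Hom P A) (p2 : Hom P B) : Prop :=
  p1 ∘ i1 = idm A /\ p2 ∘ i2 = idm B /\ p1 ∘ i2 = zerom /\ p2 ∘ i1 = zerom /\
  addm (i1 ∘ p1) (i2 ∘ p2) = idm P.

Definition is_mono {A B : Obj C} (m : Hom A B) : Prop :=
  forall Z (x y : Hom Z A), m ∘ x = m ∘ y -> x = y.

Definition is_epi {A B : Obj C} (e : Hom A B) : Prop :=
  forall Z (x y : Hom B Z), x ∘ e = y ∘ e -> x = y.

Definition is_kernel {A B K : Obj C} (f : Hom A B) (k : Hom K A) : Prop :=
  f ∘ k = zerom /\
  forall Z (x : Hom Z A), f ∘ x = zerom ->
    exists y : Hom Z K, k ∘ y = x /\ forall y' : Hom Z K, k ∘ y' = x -> y' = y.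

Definition is_cokernel {A B Q : Obj C} (f : Hom A B) (c : Hom B Q) : Prop :=
  c ∘ f = zerom /\
  forall Z (x : Hom B Z), x ∘ f = zerom ->
    exists y : Hom Q Z, y ∘ c = x /\ forall y' : Hom Q Z, y' ∘ c = x -> y' = y.

Definition is_pullback {X Y TT P : Obj C} (f : Hom X Y) (p : Hom TT Y)
  (g : Hom P X) (q : Hom P TT) : Prop :=
  f ∘ g = p ∘ q /\
  forall Z (a : Hom Z X) (b : Hom Z TT), f ∘ a = p ∘ b ->
    exists c : Hom Z P, (g ∘ c = a /\ q ∘ c = b) /\
      forall c' : Hom Z P, g ∘ c' = a -> q ∘ c' = b -> c' = c.

Record is_abelian : Prop := {
  ab_preadd : is_preadditive;
  ab_zero : exists O, is_zero_obj O;
  ab_biprod : forall A B, exists P i1 i2 p1 p2, @is_biproduct A B P i1 i2 p1 p2;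
  ab_ker : forall A B (f : Hom A B), exists K (k : Hom K A), is_kernel f k;
  ab_coker : forall A B (f : Hom A B), exists Q (c : Hom B Q), is_cokernel f c;
  ab_mono_normal : forall A B (m : Hom A B), is_mono m ->
      exists D (g : Hom B D), is_kernel g m;
  ab_epi_normal : forall A B (e : Hom A B), is_epi e ->
      exists D (g : Hom D A), is_cokernel g e }.

(* Full additive subcategory (given by its objects) closed under finite
   direct sums and direct summands. *)
Record is_add_subcat (T : Obj C -> Prop) : Prop := {
  sub_zero : exists O, is_zero_obj O /\ T O;
  sub_sum : forall A B P i1 i2 p1 p2, @is_biproduct A B P i1 i2 p1 p2 ->
      T A -> T B -> T P;
  sub_summand : forall A B P i1 i2 p1 p2, @is_biproduct A B P i1 i2 p1 p2 ->
      T P -> T A }.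

Variable T : Obj C -> Prop.

Definition factors_T {A B : Obj C} (h : Hom A B) : Prop :=
  exists D (a : Hom A D) (b : Hom D B), T D /\ h = b ∘ a.

(* equality in the stable category A / <T> *)
Definition steq {A B : Obj C} (h h' : Hom A B) : Prop :=
  factors_T (addm h (oppm h')).

Definition stiso {A B : Obj C} (a : Hom A B) : Prop :=
  exists b : Hom B A, steq (b ∘ a) (idm A) /\ steq (a ∘ b) (idm B).

Definition is_precover {TY Y : Obj C} (p : Hom TY Y) : Prop :=
  T TY /\ forall Z (t : Hom Z Y), T Z -> exists t' : Hom Z TY, p ∘ t' = t.

Definition contravariantly_finite : Prop :=
  forall Y, exists TY (p : Hom TY Y), is_precover p.

(* om : W -> K' represents Omega(ga), where W = ker q, K' = ker p'. *)
Definition omega_lift {TD D W TY' Y' K' : Obj C} (q : Hom TD D) (kq : Hom W TD)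
  (p' : Hom TY' Y') (k' : Hom K' TY') (ga : Hom D Y') (om : Hom W K') : Prop :=
  exists t : Hom TD TY', p' ∘ t = ga ∘ q /\ k' ∘ om = t ∘ kq.

(* A diagram  W --h--> B --u--> D' --v--> D  in the stable category is a left
   triangle: W = Omega D (kernel of a T-precover q of D), and the diagram is
   isomorphic (as a left triangle, first component Omega of the last one) to a
   standard triangle  Omega Y --j--> P --g--> X --f--> Y  built from some f,
   a T-precover p of Y with kernel k, the pullback (P,g,r) of f and p, and the
   induced morphism j. *)
Definition is_left_triangle {W B D' D : Obj C} (h : Hom W B) (u : Hom B D')
  (v : Hom D' D) : Prop :=
  exists TD (q : Hom TD D) (kq : Hom W TD),
    is_precover q /\ is_kernel q kq /\
  exists K P X Y (j : Hom K P) (g : Hom P X) (f : Hom X Y)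
         TY (p : Hom TY Y) (k : Hom K TY) (r : Hom P TY),
    is_precover p /\ is_kernel p k /\ is_pullback f p g r /\
    g ∘ j = zerom /\ r ∘ j = k /\
  exists (om : Hom W K) (be : Hom B P) (al : Hom D' X) (ga : Hom D Y),
    stiso om /\ stiso be /\ stiso al /\ stiso ga /\
    omega_lift q kq p k ga om /\
    steq (be ∘ h) (j ∘ om) /\ steq (al ∘ u) (g ∘ be) /\ steq (ga ∘ v) (f ∘ al).

(* f-bar is a strong monomorphism: there is a left triangle
   Omega Y -> 0 -> X -> Y (with f-bar as last morphism). *)
Definition strong_mono {X Y : Obj C} (f : Hom X Y) : Prop :=
  exists (W O : Obj C), is_zero_obj O /\
    is_left_triangle (zerom : Hom W O) (zerom : Hom O X) f.

End Defs.

Arguments is_mono {C A B} m.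
Arguments is_epi {C A B} e.
Arguments is_kernel {C A B K} f k.
Arguments is_cokernel {C A B Q} f c.
Arguments is_pullback {C X Y TT P} f p g q.
Arguments is_add_subcat {C} T.
Arguments factors_T {C} T {A B} h.
Arguments steq {C} T {A B} h h'.
Arguments stiso {C} T {A B} a.
Arguments is_precover {C} T {TY Y} p.
Arguments contravariantly_finite {C} T.
Arguments omega_lift {C TD D W TY' Y' K'} q kq p' k' ga om.
Arguments is_left_triangle {C} T {W B D' D} h u v.
Arguments strong_mono {C} T {X Y} f.

(* Main.v *)
Require Import Defs.
From Stdlib Require Import Setoid.


Lemma cA {C} (HP : is_preadditive C) {A B D E : Obj C} (h : Hom D E) (g : Hom B D) (f : Hom A B) :
  h ∘ (g ∘ f) = (h ∘ g) ∘ f.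
Proof. destruct HP as [H _]; apply H. Qed.
Lemma c1l {C} (HP : is_preadditive C) {A B : Obj C} (f : Hom A B) : idm B ∘ f = f.
Proof. destruct HP as [_ [H _]]; apply H. Qed.
Lemma c1r {C} (HP : is_preadditive C) {A B : Obj C} (f : Hom A B) : f ∘ idm A = f.
Proof. destruct HP as [_ [_ [H _]]]; apply H. Qed.
Lemma aA {C} (HP : is_preadditive C) {A B : Obj C} (f g h : Hom A B) : addm f (addm g h) = addm (addm f g) h.
Proof. destruct HP as [_ [_ [_ [H _]]]]; apply H. Qed.
Lemma aC {C} (HP : is_preadditive C) {A B : Obj C} (f g : Hom A B) : addm f g = addm g f.
Proof. destruct HP as [_ [_ [_ [_ [H _]]]]]; apply H. Qed.
Lemma a0 {C} (HP : is_preadditive C) {A B : Obj C} (f : Hom A B) : addm f zerom = f.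
Proof. destruct HP as [_ [_ [_ [_ [_ [H _]]]]]]; apply H. Qed.
Lemma aN {C} (HP : is_preadditive C) {A B : Obj C} (f : Hom A B) : addm f (oppm f) = zerom.
Proof. destruct HP as [_ [_ [_ [_ [_ [_ [H _]]]]]]]; apply H. Qed.
Lemma dl {C} (HP : is_preadditive C) {A B D : Obj C} (h : Hom B D) (f g : Hom A B) : h ∘ (addm f g) = addm (h ∘ f) (h ∘ g).
Proof. destruct HP as [_ [_ [_ [_ [_ [_ [_ [H _]]]]]]]]; apply H. Qed.
Lemma dr {C} (HP : is_preadditive C) {A B D : Obj C} (f g : Hom B D) (h : Hom A B) : (addm f g) ∘ h = addm (f ∘ h) (g ∘ h).
Proof. destruct HP as [_ [_ [_ [_ [_ [_ [_ [_ H]]]]]]]]; apply H. Qed.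

Lemma a0l {C} (HP : is_preadditive C) {A B : Obj C} (f : Hom A B) : addm zerom f = f.
Proof. rewrite (aC HP); apply (a0 HP). Qed.
Lemma aNl {C} (HP : is_preadditive C) {A B : Obj C} (f : Hom A B) : addm (oppm f) f = zerom.
Proof. rewrite (aC HP); apply (aN HP). Qed.
Lemma subK {C} (HP : is_preadditive C) {A B : Obj C} (a b : Hom A B) : addm (addm a (oppm b)) b = a.
Proof. rewrite <- (aA HP), (aNl HP), (a0 HP); reflexivity. Qed.
Lemma addK {C} (HP : is_preadditive C) {A B : Obj C} (a b : Hom A B) : addm (addm a b) (oppm b) = a.
Proof. rewrite <- (aA HP), (aN HP), (a0 HP); reflexivity. Qed.
Lemma cancel_r {C} (HP : is_preadditive C) {A B : Obj C} (a b c : Hom A B) : addm a c = addm b c -> a = b.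
Proof. intro H. rewrite <- (addK HP a c), H, (addK HP). reflexivity. Qed.
Lemma uniq_inv {C} (HP : is_preadditive C) {A B : Obj C} (a b : Hom A B) : addm a b = zerom -> b = oppm a.
Proof. intro H. apply (cancel_r HP) with a. rewrite (aC HP b), H, (aNl HP). reflexivity. Qed.
Lemma comp0r {C} (HP : is_preadditive C) {A B D : Obj C} (h : Hom B D) : h ∘ (@zerom C A B) = zerom.
Proof. apply (cancel_r HP) with (h ∘ zerom). rewrite <- (dl HP), (a0 HP), (a0l HP). reflexivity. Qed.
Lemma comp0l {C} (HP : is_preadditive C) {A B D : Obj C} (h : Hom A B) : (@zerom C B D) ∘ h = zerom.
Proof. apply (cancel_r HP) with (zerom ∘ h). rewrite <- (dr HP), (a0 HP), (a0l HP). reflexivity. Qed.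
Lemma compNr {C} (HP : is_preadditive C) {A B D : Obj C} (h : Hom B D) (f : Hom A B) : h ∘ oppm f = oppm (h ∘ f).
Proof. apply (uniq_inv HP). rewrite <- (dl HP), (aN HP), (comp0r HP). reflexivity. Qed.
Lemma compNl {C} (HP : is_preadditive C) {A B D : Obj C} (h : Hom A B) (f : Hom B D) : oppm f ∘ h = oppm (f ∘ h).
Proof. apply (uniq_inv HP). rewrite <- (dr HP), (aN HP), (comp0l HP). reflexivity. Qed.
Lemma oppK {C} (HP : is_preadditive C) {A B : Obj C} (a : Hom A B) : oppm (oppm a) = a.
Proof. symmetry. apply (uniq_inv HP). apply (aNl HP). Qed.
Lemma opp0 {C} (HP : is_preadditive C) {A B : Obj C} : oppm (@zerom C A B) = zerom.
Proof. symmetry. apply (uniq_inv HP). apply (a0 HP). Qed.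
Lemma oppD {C} (HP : is_preadditive C) {A B : Obj C} (a b : Hom A B) : oppm (addm a b) = addm (oppm a) (oppm b).
Proof. symmetry. apply (uniq_inv HP).
  rewrite (aC HP (oppm a)), (aA HP), <- (aA HP a), (aN HP), (a0 HP), (aN HP). reflexivity. Qed.
Lemma sub_eq0 {C} (HP : is_preadditive C) {A B : Obj C} (a b : Hom A B) : addm a (oppm b) = zerom -> a = b.
Proof. intro H. rewrite <- (subK HP a b), H, (a0l HP). reflexivity. Qed.
Lemma sub_sub {C} (HP : is_preadditive C) {A B : Obj C} (a b : Hom A B) :
  addm a (oppm (addm a (oppm b))) = b.
Proof. rewrite (oppD HP), (oppK HP), (aA HP), (aN HP), (a0l HP). reflexivity. Qed.
Lemma sub_cyc {C} (HP : is_preadditive C) {A B : Obj C} (a x : Hom A B) :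
  addm (addm a (oppm x)) (addm x (oppm a)) = zerom.
Proof. rewrite <- (aA HP), (aA HP (oppm x)), (aNl HP), (a0l HP), (aN HP). reflexivity. Qed.

Lemma FT0 {C} (HP : is_preadditive C) {T} (HT : is_add_subcat T) {A B : Obj C} :
  factors_T T (@zerom C A B).
Proof. destruct (sub_zero HT) as [O [_ HO]]. exists O, zerom, zerom. split; auto.
  symmetry; apply (comp0l HP). Qed.
Lemma FT_src {C} (HP : is_preadditive C) {T} {A B : Obj C} (h : Hom A B) : T A -> factors_T T h.
Proof. intro H. exists A, (idm A), h. split; auto. symmetry; apply (c1r HP). Qed.
Lemma FT_tgt {C} (HP : is_preadditive C) {T} {A B : Obj C} (h : Hom A B) : T B -> factors_T T h.
Proof. intro H. exists B, h, (idm B). split; auto. symmetry; apply (c1l HP). Qed.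
Lemma FT_cl {C} (HP : is_preadditive C) {T} {A B D : Obj C} (x : Hom B D) (h : Hom A B) :
  factors_T T h -> factors_T T (x ∘ h).
Proof. intros [E [a [b [HE ->]]]]. exists E, a, (x ∘ b). split; auto. apply (cA HP). Qed.
Lemma FT_cr {C} (HP : is_preadditive C) {T} {A B D : Obj C} (h : Hom B D) (y : Hom A B) :
  factors_T T h -> factors_T T (h ∘ y).
Proof. intros [E [a [b [HE ->]]]]. exists E, (a ∘ y), b. split; auto. symmetry; apply (cA HP). Qed.
Lemma FT_opp {C} (HP : is_preadditive C) {T} {A B : Obj C} (h : Hom A B) :
  factors_T T h -> factors_T T (oppm h).
Proof. intros [E [a [b [HE ->]]]]. exists E, a, (oppm b). split; auto. symmetry; apply (compNl HP). Qed.
Lemma FT_add {C} (HC : is_abelian C) {T} (HT : is_add_subcat T) {A B : Obj C} (h1 h2 : Hom A B) :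
  factors_T T h1 -> factors_T T h2 -> factors_T T (addm h1 h2).
Proof. pose proof (ab_preadd HC) as HP.
  intros [E1 [a1 [b1 [HE1 ->]]]] [E2 [a2 [b2 [HE2 ->]]]].
  destruct (ab_biprod HC E1 E2) as [Q [i1 [i2 [p1 [p2 Hb]]]]].
  pose proof Hb as [H1 [H2 [H3 [H4 H5]]]].
  exists Q, (addm (i1 ∘ a1) (i2 ∘ a2)), (addm (b1 ∘ p1) (b2 ∘ p2)). split.
  - eapply (sub_sum HT); eauto.
  - assert (E : forall X1 X2 (u : Hom X1 B) (p : Hom Q X1) (i : Hom X2 Q) (a : Hom A X2),
      (u ∘ p) ∘ (i ∘ a) = u ∘ ((p ∘ i) ∘ a)).
    { intros. rewrite !(cA HP). reflexivity. }
    rewrite (dl HP), !(dr HP), !E, H1, H2, H3, H4,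
      !(comp0l HP), !(comp0r HP), !(c1l HP), (a0 HP), (a0l HP). reflexivity.
Qed.

Lemma steq_refl {C} (HP : is_preadditive C) {T} (HT : is_add_subcat T) {A B : Obj C} (h : Hom A B) :
  steq T h h.
Proof. unfold steq. rewrite (aN HP). apply (FT0 HP HT). Qed.
Lemma steq_eq {C} (HP : is_preadditive C) {T} (HT : is_add_subcat T) {A B : Obj C} (h h' : Hom A B) :
  h = h' -> steq T h h'.
Proof. intros ->; apply (steq_refl HP HT). Qed.
Lemma steq_sym {C} (HP : is_preadditive C) {T} {A B : Obj C} (h h' : Hom A B) :
  steq T h h' -> steq T h' h.
Proof. unfold steq. intro H. apply FT_opp in H; auto.
  rewrite (oppD HP), (oppK HP), (aC HP) in H. exact H. Qed.
Lemma steq_trans {C} (HC : is_abelian C) {T} (HT : is_add_subcat T) {A B : Obj C} (h1 h2 h3 : Hom A B) :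
  steq T h1 h2 -> steq T h2 h3 -> steq T h1 h3.
Proof. pose proof (ab_preadd HC) as HP. unfold steq. intros H1 H2.
  pose proof (FT_add HC HT _ _ H1 H2) as H.
  rewrite <- (aA HP), (aA HP (oppm h2)), (aNl HP), (a0l HP) in H. exact H. Qed.
Lemma steq_cl {C} (HP : is_preadditive C) {T} {A B D : Obj C} (x : Hom B D) (h h' : Hom A B) :
  steq T h h' -> steq T (x ∘ h) (x ∘ h').
Proof. unfold steq. intro H. apply (FT_cl HP x) in H. rewrite (dl HP), (compNr HP) in H. exact H. Qed.
Lemma steq_cr {C} (HP : is_preadditive C) {T} {A B D : Obj C} (y : Hom A B) (h h' : Hom B D) :
  steq T h h' -> steq T (h ∘ y) (h' ∘ y).
Proof. unfold steq. intro H. apply (FT_cr HP _ y) in H. rewrite (dr HP), (compNl HP) in H. exact H. Qed.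
Lemma FT_steq {C} (HP : is_preadditive C) {T} {A B : Obj C} (h : Hom A B) :
  factors_T T h <-> steq T h zerom.
Proof. unfold steq. rewrite (opp0 HP), (a0 HP). tauto. Qed.
Lemma steq_FT {C} (HC : is_abelian C) {T} (HT : is_add_subcat T) {A B : Obj C} (h h' : Hom A B) :
  steq T h h' -> factors_T T h' -> factors_T T h.
Proof. pose proof (ab_preadd HC) as HP. intros H1 H2. apply (FT_steq HP) in H2. apply (FT_steq HP).
  eapply (steq_trans HC HT); eauto. Qed.

Lemma ker_mono {C} (HP : is_preadditive C) {A B K : Obj C} (f : Hom A B) (k : Hom K A) :
  is_kernel f k -> is_mono k.
Proof. intros [H0 H] Z x y Hxy.
  destruct (H Z (k ∘ x)) as [y0 [_ Hu]].
  - rewrite (cA HP), H0, (comp0l HP). reflexivity.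
  - rewrite (Hu x eq_refl), (Hu y (eq_sym Hxy)). reflexivity.
Qed.

Lemma retract_T {C} (HC : is_abelian C) {T} (HT : is_add_subcat T) {P D : Obj C}
  (i : Hom P D) (s : Hom D P) : T D -> s ∘ i = idm P -> T P.
Proof. pose proof (ab_preadd HC) as HP. intros HD Hsi.
  destruct (ab_ker HC _ _ s) as [K [kk Hk]].
  pose proof (ker_mono HP _ _ Hk) as Hm.
  pose proof Hk as [Hk0 Hku].
  destruct (Hku D (addm (idm D) (oppm (i ∘ s)))) as [mm [Hmm _]].
  { rewrite (dl HP), (compNr HP), (cA HP), Hsi, (c1l HP), (c1r HP), (aN HP). reflexivity. }
  assert (Hb : @is_biproduct C P K D i kk s mm).
  { repeat split.
    - exact Hsi.
    - apply Hm. rewrite (cA HP), Hmm, (dr HP), (compNl HP), <- (cA HP i), Hk0, (comp0r HP),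
        (opp0 HP), (a0 HP), (c1l HP), (c1r HP). reflexivity.
    - exact Hk0.
    - apply Hm. rewrite (cA HP), Hmm, (dr HP), (compNl HP), <- (cA HP i), Hsi, (comp0r HP),
        (c1l HP), (c1r HP), (aN HP). reflexivity.
    - rewrite Hmm, (aA HP), (aC HP (i ∘ s)), <- (aA HP), (aN HP), (a0 HP). reflexivity. }
  exact (sub_summand HT Hb HD).
Qed.

Lemma FTid_T {C} (HC : is_abelian C) {T} (HT : is_add_subcat T) {P : Obj C} :
  factors_T T (idm P) -> T P.
Proof. intros [D [a [b [HD H]]]]. apply (retract_T HC HT a b HD). auto. Qed.

Lemma pb_exists {C} (HC : is_abelian C) {X Y TT : Obj C} (f : Hom X Y) (p : Hom TT Y) :
  exists P (g : Hom P X) (q : Hom P TT), is_pullback f p g q.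
Proof. pose proof (ab_preadd HC) as HP.
  destruct (ab_biprod HC X TT) as [Q [i1 [i2 [p1 [p2 [H1 [H2 [H3 [H4 H5]]]]]]]]].
  destruct (ab_ker HC _ _ (addm (f ∘ p1) (oppm (p ∘ p2)))) as [P [ka [Hk0 Hku]]].
  exists P, (p1 ∘ ka), (p2 ∘ ka). split.
  - apply (sub_eq0 HP). rewrite (dr HP), (compNl HP) in Hk0. rewrite !(cA HP). exact Hk0.
  - intros Z a b Hab.
    destruct (Hku Z (addm (i1 ∘ a) (i2 ∘ b))) as [c [Hc Hcu]].
    { rewrite (dl HP), !(dr HP), !(compNl HP), <- !(cA HP), !(cA HP p1), !(cA HP p2), H1, H2, H3, H4. rewrite
        !(c1l HP), !(comp0l HP), !(comp0r HP), (opp0 HP), (a0 HP), (a0l HP), Hab, (aN HP). reflexivity. }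
    exists c. split.
    + rewrite <- !(cA HP), Hc, !(dl HP), !(cA HP), H1, H2, H3, H4, !(comp0l HP), !(c1l HP),
        (a0 HP), (a0l HP). split; reflexivity.
    + intros c' E1 E2. apply Hcu.
      rewrite <- (cA HP) in E1. rewrite <- (cA HP) in E2. rewrite <- (c1l HP (ka ∘ c')), <- H5, (dr HP), <- !(cA HP), E1, E2. reflexivity.
Qed.

Lemma pb_unique {C} (HP : is_preadditive C) {X Y TT P Z : Obj C} (f : Hom X Y) (p : Hom TT Y)
  (g : Hom P X) (q : Hom P TT) (c1 c2 : Hom Z P) :
  is_pullback f p g q -> g ∘ c1 = g ∘ c2 -> q ∘ c1 = q ∘ c2 -> c1 = c2.
Proof. intros [Hc Hu] E1 E2.
  destruct (Hu Z (g ∘ c1) (q ∘ c1)) as [c [_ Hcu]].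
  { rewrite !(cA HP), Hc. reflexivity. }
  rewrite (Hcu c1 eq_refl eq_refl), (Hcu c2 (eq_sym E1) (eq_sym E2)). reflexivity.
Qed.

Lemma pb_ker {C} (HP : is_preadditive C) {X Y TT P K : Obj C} (f : Hom X Y) (p : Hom TT Y)
  (g : Hom P X) (r : Hom P TT) (k : Hom K TT) (j : Hom K P) :
  is_pullback f p g r -> is_kernel p k -> g ∘ j = zerom -> r ∘ j = k ->
  forall Z (x : Hom Z P), g ∘ x = zerom -> exists y, j ∘ y = x.
Proof. intros Hpb [Hk0 Hku] Hgj Hrj Z x Hx.
  destruct (Hku Z (r ∘ x)) as [y [Hy _]].
  { rewrite (cA HP), <- (proj1 Hpb), <- (cA HP), Hx, (comp0r HP). reflexivity. }
  exists y. apply (pb_unique HP f p g r); auto.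
  - rewrite (cA HP), Hgj, Hx, (comp0l HP). reflexivity.
  - rewrite (cA HP), Hrj, Hy. reflexivity.
Qed.

Lemma pb_j {C} (HP : is_preadditive C) {X Y TT P K : Obj C} (f : Hom X Y) (p : Hom TT Y)
  (g : Hom P X) (r : Hom P TT) (k : Hom K TT) :
  is_pullback f p g r -> is_kernel p k -> exists j : Hom K P, g ∘ j = zerom /\ r ∘ j = k.
Proof. intros [_ Hu] [Hk0 _]. destruct (Hu K zerom k) as [c [Hc _]].
  { rewrite (comp0r HP), Hk0. reflexivity. }
  exists c. exact Hc.
Qed.

Lemma precover_pb {C} (HP : is_preadditive C) {T} {X Y TT P : Obj C} (f : Hom X Y) (p : Hom TT Y)
  (g : Hom P X) (r : Hom P TT) :
  is_precover T p -> is_pullback f p g r -> (is_precover T g <-> T P).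
Proof. intros [HTT Hl] [Hc Hu]. split.
  - intros [H _]; exact H.
  - intro HTP. split; auto. intros Z t HZ.
    destruct (Hl Z (f ∘ t) HZ) as [t' Ht'].
    destruct (Hu Z t t' (eq_sym Ht')) as [c [[Hc1 _] _]]. exists c; exact Hc1.
Qed.

Lemma build_triangle {C} (HC : is_abelian C) {T} (HT : is_add_subcat T) {X Y TY P : Obj C}
  (f : Hom X Y) (p : Hom TY Y) (g : Hom P X) (r : Hom P TY) :
  is_precover T p -> is_pullback f p g r -> T P -> strong_mono T f.
Proof. pose proof (ab_preadd HC) as HP. intros Hp Hpb HTP.
  destruct (ab_ker HC _ _ p) as [K [k Hk]].
  destruct (pb_j HP f p g r k Hpb Hk) as [j [Hgj Hrj]].
  destruct (sub_zero HT) as [O [HO HTO]].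
  exists K, O. split; auto.
  exists TY, p, k. split; auto. split; auto.
  exists K, P, X, Y, j, g, f, TY, p, k, r.
  split; auto. split; auto. split; auto. split; auto. split; auto.
  exists (idm K), zerom, (idm X), (idm Y).
  assert (Sid : forall A : Obj C, stiso T (idm A)).
  { intro A. exists (idm A). rewrite (c1l HP). split; apply (steq_refl HP HT). }
  split; [apply Sid|]. split.
  { exists zerom. split; unfold steq; [apply (FT_src HP); auto | apply (FT_tgt HP); auto]. }
  split; [apply Sid|]. split; [apply Sid|]. split.
  { exists (idm TY). split; rewrite (c1l HP), (c1r HP); reflexivity. }
  split. { unfold steq; apply (FT_tgt HP); auto. }
  split. { unfold steq; apply (FT_src HP); auto. }
  rewrite (c1l HP), (c1r HP). apply (steq_refl HP HT).
Qed.

Lemma hard {C} (HC : is_abelian C) {T} (HT : is_add_subcat T) {X Y : Obj C} (f : Hom X Y) :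
  strong_mono T f -> forall TY (p : Hom TY Y) P (g : Hom P X) (r : Hom P TY),
    is_precover T p -> is_pullback f p g r -> T P.
Proof. pose proof (ab_preadd HC) as HP.
  intros [W [O [HO [TD [q [kq [Hq [Hkq [K' [P' [X' [Y' [j' [g' [f' [TY' [p' [k' [r' [Hp' [Hk' [Hpb' [Hgj' [Hrj' [om [be [al [ga [Hom [Hbe [Hal [Hga [Hol [E1 [E2 E3]]]]]]]]]]]]]]]]]]]]]]]]]]]]]]]]]]].
  intros TY p P g r Hp Hpb.
  assert (HTP' : T P').
  { destruct Hbe as [b [_ Hb2]]. apply (FTid_T HC HT).
    apply (steq_FT HC HT _ (be ∘ b)).
    - apply (steq_sym HP). exact Hb2.
    - destruct (sub_zero HT) as [O0 [_ HTO0]].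
      exists O0, (zerom ∘ b), (be ∘ zerom). split; auto.
      rewrite <- (cA HP), (cA HP zerom).
      rewrite ((proj1 HO) O (zerom ∘ zerom) (idm O)), (c1l HP). reflexivity. }
  destruct Hal as [al' [Hal1 Hal2]]. destruct Hga as [ga' [Hga1 Hga2]].
  destruct Hp as [HTY Hpl]. destruct Hp' as [HTY' Hpl'].
  destruct (ab_ker HC _ _ p) as [K [k Hk]].
  destruct (pb_j HP f p g r k Hpb Hk) as [j [Hgj Hrj]].
  pose proof (ker_mono HP _ _ Hk) as Hkm.
  assert (FTg : factors_T T g).
  { destruct E3 as [D4 [a4 [b4 [HD4 Hd4]]]].
    destruct (Hpl' D4 b4 HD4) as [v4 Hv4].
    destruct (Hpl' TY (ga ∘ p) HTY) as [u Hu].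
    assert (Hf : f' ∘ (al ∘ g) = p' ∘ addm (u ∘ r) (oppm (v4 ∘ (a4 ∘ g)))).
    { assert (Hfa : f' ∘ al = addm (ga ∘ f) (oppm (b4 ∘ a4))).
      { rewrite <- Hd4, (sub_sub HP). reflexivity. }
      rewrite (cA HP), Hfa, (dr HP), (compNl HP), (dl HP), (compNr HP), !(cA HP), Hu, Hv4,
        <- !(cA HP), (proj1 Hpb). reflexivity. }
    destruct (proj2 Hpb' P (al ∘ g) _ Hf) as [be' [[Hbe1 _] _]].
    apply (steq_FT HC HT _ ((al' ∘ al) ∘ g)).
    - apply (steq_sym HP). rewrite <- (c1l HP g) at 2. apply (steq_cr HP). exact Hal1.
    - rewrite <- (cA HP), <- Hbe1, (cA HP). exists P', be', (al' ∘ g'). split; auto. }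
  assert (FTj : factors_T T j).
  { destruct (Hpl' TY (ga ∘ p) HTY) as [u Hu].
    destruct (Hpl TY' (ga' ∘ p') HTY') as [u' Hu'].
    destruct (proj2 Hk' K (u ∘ k)) as [m [Hm _]].
    { rewrite (cA HP), Hu, <- (cA HP), (proj1 Hk), (comp0r HP). reflexivity. }
    destruct (proj2 Hk K' (u' ∘ k')) as [e0 [He0 _]].
    { rewrite (cA HP), Hu', <- (cA HP), (proj1 Hk'), (comp0r HP). reflexivity. }
    assert (Hd : steq T (f ∘ al') (ga' ∘ f')).
    { apply (steq_trans HC HT _ ((ga' ∘ ga) ∘ (f ∘ al'))).
      { apply (steq_sym HP). rewrite <- (c1l HP (f ∘ al')) at 2. apply (steq_cr HP). exact Hga1. }
      rewrite <- (cA HP), (cA HP ga).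
      apply (steq_trans HC HT _ (ga' ∘ ((f' ∘ al) ∘ al'))).
      { apply (steq_cl HP). apply (steq_cr HP). exact E3. }
      rewrite <- (cA HP). rewrite (cA HP ga').
      rewrite <- (c1r HP (ga' ∘ f')) at 2. apply (steq_cl HP). exact Hal2. }
    destruct Hd as [D [a [b [HD Hdab]]]].
    destruct (Hpl D b HD) as [v Hv].
    assert (Hf : f ∘ (al' ∘ g') = p ∘ addm (u' ∘ r') (v ∘ (a ∘ g'))).
    { assert (Hfa : f ∘ al' = addm (b ∘ a) (ga' ∘ f')).
      { rewrite <- Hdab, (subK HP). reflexivity. }
      rewrite (cA HP), Hfa, (dr HP), (dl HP), !(cA HP), Hu', Hv, <- !(cA HP), (proj1 Hpb'), (aC HP).
      reflexivity. }
    destruct (proj2 Hpb P' (al' ∘ g') _ Hf) as [n [[Hn1 Hn2] _]].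
    assert (Hnj : n ∘ j' = j ∘ e0).
    { apply (pb_unique HP f p g r); auto.
      - rewrite !(cA HP), Hn1, Hgj, <- (cA HP), Hgj', (comp0r HP), (comp0l HP). reflexivity.
      - rewrite !(cA HP), Hn2, Hrj, He0, (dr HP), <- !(cA HP), Hgj', Hrj', (comp0r HP),
          !(comp0r HP), (a0 HP). reflexivity. }
    destruct Hga1 as [D2 [a2 [b2 [HD2 Hd2]]]].
    destruct (Hpl D2 b2 HD2) as [v2 Hv2].
    destruct (proj2 Hk TY (addm (addm (idm TY) (oppm (u' ∘ u))) (v2 ∘ (a2 ∘ p)))) as [s [Hs _]].
    { rewrite (dl HP), (dl HP), (compNr HP), !(cA HP), Hu', Hv2, <- Hd2, (c1r HP), (dr HP), (compNl HP), (c1l HP),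
        <- (cA HP ga' p' u), Hu, (cA HP ga' ga p).
      apply (sub_cyc HP). }
    assert (Hid : addm (idm K) (oppm (e0 ∘ m)) = s ∘ k).
    { apply Hkm. rewrite (cA HP), Hs, !(dr HP), (dl HP), (compNr HP), (cA HP), He0, <- (cA HP), Hm,
        <- (cA HP v2), <- (cA HP a2), (proj1 Hk), (comp0r HP), (comp0r HP), (a0 HP),
        (c1l HP), (c1r HP), (compNl HP), (cA HP). reflexivity. }
    apply (steq_FT HC HT _ (j ∘ (e0 ∘ m))).
    - rewrite <- (c1r HP j) at 1. apply (steq_cl HP). unfold steq. rewrite Hid.
      exists TY, k, s. split; auto.
    - rewrite (cA HP), <- Hnj. exists P', (j' ∘ m), n. split; auto. symmetry; apply (cA HP). }
  apply (FTid_T HC HT).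
  destruct FTg as [D [a [b [HD Hgab]]]].
  destruct (Hpl D (f ∘ b) HD) as [t Ht].
  destruct (proj2 Hpb D b t (eq_sym Ht)) as [d [[Hd1 _] _]].
  destruct (pb_ker HP f p g r k j Hpb Hk Hgj Hrj P (addm (idm P) (oppm (d ∘ a)))) as [e He].
  { rewrite (dl HP), (compNr HP), (cA HP), Hd1, <- Hgab, (c1r HP), (aN HP). reflexivity. }
  rewrite <- (subK HP (idm P) (d ∘ a)), <- He.
  apply (FT_add HC HT).
  - apply (FT_cr HP). exact FTj.
  - exists D, a, d. split; auto.
Qed.

Theorem proposition2p2 (C : PreCat) (HC : is_abelian C)
  (T : Obj C -> Prop) (HT : is_add_subcat T) (Hcf : contravariantly_finite T)
  (X Y : Obj C) (f : Hom X Y) :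
  (* (1) <-> (2), "for every" version *)
  (strong_mono T f <->
     forall TY (p : Hom TY Y) P (g : Hom P X) (q : Hom P TY),
       is_precover T p -> is_pullback f p g q -> is_precover T g) /\
  (* (1) <-> (2), "for some" version *)
  (strong_mono T f <->
     exists TY (p : Hom TY Y) P (g : Hom P X) (q : Hom P TY),
       is_precover T p /\ is_pullback f p g q /\ is_precover T g) /\
  (* (1) <-> (3), "for every" version *)
  (strong_mono T f <->
     forall TY (p : Hom TY Y) P (g : Hom P X) (q : Hom P TY),
       is_precover T p -> is_pullback f p g q -> T P) /\
  (* (1) <-> (3), "for some" version *)
  (strong_mono T f <->
     exists TY (p : Hom TY Y) P (g : Hom P X) (q : Hom P TY),
       is_precover T p /\ is_pullback f p g q /\ T P).
Proof.
  pose proof (ab_preadd HC) as HP.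
  destruct (Hcf Y) as [TY0 [p0 Hp0]].
  destruct (pb_exists HC f p0) as [P0 [g0 [r0 Hpb0]]].
  pose proof (hard HC HT f) as HH.
  split; [|split; [|split]]; split.
  - intros Hs TY p P g q Hp Hpb. apply (proj2 (precover_pb HP f p g q Hp Hpb)).
    exact (HH Hs TY p P g q Hp Hpb).
  - intro H. apply (build_triangle HC HT f p0 g0 r0 Hp0 Hpb0).
    apply (proj1 (precover_pb HP f p0 g0 r0 Hp0 Hpb0)). exact (H _ _ _ _ _ Hp0 Hpb0).
  - intro Hs. exists TY0, p0, P0, g0, r0. split; auto. split; auto.
    apply (proj2 (precover_pb HP f p0 g0 r0 Hp0 Hpb0)). exact (HH Hs _ _ _ _ _ Hp0 Hpb0).
  - intros [TY [p [P [g [q [Hp [Hpb Hg]]]]]]]. apply (build_triangle HC HT f p g q Hp Hpb).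
    apply (proj1 (precover_pb HP f p g q Hp Hpb)). exact Hg.
  - intros Hs TY p P g q Hp Hpb. exact (HH Hs TY p P g q Hp Hpb).
  - intro H. apply (build_triangle HC HT f p0 g0 r0 Hp0 Hpb0). exact (H _ _ _ _ _ Hp0 Hpb0).
  - intro Hs. exists TY0, p0, P0, g0, r0. split; auto. split; auto.
    exact (HH Hs _ _ _ _ _ Hp0 Hpb0).
  - intros [TY [p [P [g [q [Hp [Hpb Hg]]]]]]]. exact (build_triangle HC HT f p g q Hp Hpb Hg).
Qed.
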